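(* Let $T=(T,\eta,\mu)$ be a commutative monad on a category $\mathcal{A}$ with finite products, and assume $\mathrm{Alg}(T)$ is symmetric monoidal $(\otimes,I)$ with $I=T(1)$ such that the free functor is strong monoidal via natural isomorphisms $\xi\colon T(X)\otimes T(Y)\cong T(X\times Y)$ of algebras. Let $a\colon T(X)\to X$ be a $T$-algebra with a basis $b\colon X\to T(X)$. Define algebra maps $d_b=(a\otimes a)\circ\xi^{-1}\circ T(\Delta)\circ b\colon X\to X\otimes X$ and $u_b=T(!)\circ b\colon X\to T(1)=I$, where $\Delta\colon X\to X\times X$ is the diagonal and $!\colon X\to1$. Then $(X,d_b,u_b)$ is a commutative comonoid in $\mathrm{Alg}(T)$.
   Context: $\mathrm{Alg}(T)$: Eilenberg–Moore algebras of $T$. A basis ($\overline{T}$-coalgebra) on the algebra $a\colon TX\to X$ is a map $b\colon X\to TX$ in $\mathcal{A}$ with $b\circ a=\mu_X\circ T(b)$, $a\circ b=\mathrm{id}_X$ and $T(\eta_X)\circ b=T(b)\circ b$. A commutative comonoid in a symmetric monoidal category is an object with maps $d\colon X\to X\otimes X$, $u\colon X\to I$ satisfying coassociativity, counitality and cocommutativity. A commutative (symmetric monoidal) monad is one whose two double strengths coincide; in this setting $a\otimes a$ denotes the tensor of algebra maps $T(X)\otimes T(X)\to X\otimes X$. *)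

(* Defs.v *)
(* Equality of morphisms is Leibniz equality. *)
From Stdlib Require Import ProofIrrelevance.

Record Category := {
  ob :> Type;
  hom : ob -> ob -> Type;
  idm : forall A, hom A A;
  comp : forall A B D, hom B D -> hom A B -> hom A D;
  comp_id_l : forall A B (f : hom A B), comp A B B (idm B) f = f;
  comp_id_r : forall A B (f : hom A B), comp A A B f (idm A) = f;
  comp_assoc : forall A B D E (h : hom D E) (g : hom B D) (f : hom A B),
      comp A D E h (comp A B D g f) = comp A B E (comp B D E h g) f }.

Arguments hom {c} _ _.
Arguments idm {c} A.
Arguments comp {c A B D} _ _.
Arguments comp_id_l {c A B} f.
Arguments comp_id_r {c A B} f.
Arguments comp_assoc {c A B D E} h g f.

Notation "g ∘ f" := (comp g f) (at level 40, left associativity).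

Record FinProducts (C : Category) := {
  terminal : C;
  bang : forall X : C, hom X terminal;
  bang_uniq : forall (X : C) (f : hom X terminal), f = bang X;
  prod : C -> C -> C;
  pr1 : forall X Y : C, hom (prod X Y) X;
  pr2 : forall X Y : C, hom (prod X Y) Y;
  pair : forall Z X Y : C, hom Z X -> hom Z Y -> hom Z (prod X Y);
  pr1_pair : forall Z X Y (f : hom Z X) (g : hom Z Y), pr1 X Y ∘ pair Z X Y f g = f;
  pr2_pair : forall Z X Y (f : hom Z X) (g : hom Z Y), pr2 X Y ∘ pair Z X Y f g = g;
  pair_uniq : forall Z X Y (h : hom Z (prod X Y)),
      pair Z X Y (pr1 X Y ∘ h) (pr2 X Y ∘ h) = h }.

Arguments terminal {C} f0.
Arguments bang {C} f0 X.
Arguments prod {C} f0 _ _.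
Arguments pr1 {C} f0 X Y.
Arguments pr2 {C} f0 X Y.
Arguments pair {C} f0 {Z X Y} _ _.

Section ProdOps.
Context {C : Category} (P : FinProducts C).
Definition prod_map {X X' Y Y' : C} (f : hom X X') (g : hom Y Y')
  : hom (prod P X Y) (prod P X' Y') :=
  pair P (f ∘ pr1 P X Y) (g ∘ pr2 P X Y).
Definition diag (X : C) : hom X (prod P X X) := pair P (idm X) (idm X).
Definition swap (X Y : C) : hom (prod P X Y) (prod P Y X) :=
  pair P (pr2 P X Y) (pr1 P X Y).
Definition assocp (X Y Z : C) : hom (prod P (prod P X Y) Z) (prod P X (prod P Y Z)) :=
  pair P (pr1 P X Y ∘ pr1 P (prod P X Y) Z)
         (pair P (pr2 P X Y ∘ pr1 P (prod P X Y) Z) (pr2 P (prod P X Y) Z)).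
End ProdOps.

Record Monad (C : Category) := {
  T : C -> C;
  Tmap : forall X Y : C, hom X Y -> hom (T X) (T Y);
  Tmap_id : forall X : C, Tmap X X (idm X) = idm (T X);
  Tmap_comp : forall X Y Z (g : hom Y Z) (f : hom X Y),
      Tmap X Z (g ∘ f) = Tmap Y Z g ∘ Tmap X Y f;
  eta : forall X : C, hom X (T X);
  mu : forall X : C, hom (T (T X)) (T X);
  eta_nat : forall X Y (f : hom X Y), Tmap X Y f ∘ eta X = eta Y ∘ f;
  mu_nat : forall X Y (f : hom X Y), Tmap X Y f ∘ mu X = mu Y ∘ Tmap _ _ (Tmap X Y f);
  mu_eta_l : forall X, mu X ∘ eta (T X) = idm (T X);
  mu_eta_r : forall X, mu X ∘ Tmap _ _ (eta X) = idm (T X);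
  mu_assoc : forall X, mu X ∘ Tmap _ _ (mu X) = mu X ∘ mu (T X) }.

Arguments T {C} m _.
Arguments Tmap {C} m {X Y} _.
Arguments eta {C} m X.
Arguments mu {C} m X.
Arguments mu_eta_l {C} m X.
Arguments mu_assoc {C} m X.
Arguments mu_nat {C} m X Y f.
Arguments Tmap_id {C} m X.
Arguments Tmap_comp {C} m {X Y Z} g f.

Record CommStrength {C : Category} (P : FinProducts C) (M : Monad C) := {
  st : forall X Y : C, hom (prod P X (T M Y)) (T M (prod P X Y));
  st_nat : forall X X' Y Y' (f : hom X X') (g : hom Y Y'),
      Tmap M (prod_map P f g) ∘ st X Y = st X' Y' ∘ prod_map P f (Tmap M g);
  st_unit : forall Y : C,
      Tmap M (pr2 P (terminal P) Y) ∘ st (terminal P) Y = pr2 P (terminal P) (T M Y);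
  st_assoc : forall X Y Z : C,
      Tmap M (assocp P X Y Z) ∘ st (prod P X Y) Z
      = st X (prod P Y Z) ∘ prod_map P (idm X) (st Y Z) ∘ assocp P X Y (T M Z);
  st_eta : forall X Y : C,
      st X Y ∘ prod_map P (idm X) (eta M Y) = eta M (prod P X Y);
  st_mu : forall X Y : C,
      st X Y ∘ prod_map P (idm X) (mu M Y)
      = mu M (prod P X Y) ∘ Tmap M (st X Y) ∘ st X (T M Y);
  (* costrength  T X × Y -> T (X × Y) *)
  commutative : forall X Y : C,
      let cst := fun A B : C =>
        Tmap M (swap P B A) ∘ st B A ∘ swap P (T M A) B in
      mu M (prod P X Y) ∘ Tmap M (cst X Y) ∘ st (T M X) Y
      = mu M (prod P X Y) ∘ Tmap M (st X Y) ∘ cst X (T M Y) }.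

Arguments st {C P M} c X Y.

Section Algebras.
Context {C : Category} (M : Monad C).

Record Alg := {
  acar : C;
  astr : hom (T M acar) acar;
  astr_eta : astr ∘ eta M acar = idm acar;
  astr_mu : astr ∘ Tmap M astr = astr ∘ mu M acar }.

Definition AlgHom (A B : Alg) : Type :=
  { f : hom (acar A) (acar B) | f ∘ astr A = astr B ∘ Tmap M f }.

Definition ahid (A : Alg) : AlgHom A A.
Proof.
  exists (idm (acar A)).
  rewrite Tmap_id, comp_id_l, comp_id_r. reflexivity.
Defined.

Definition ahcomp {A B D : Alg} (g : AlgHom B D) (f : AlgHom A B) : AlgHom A D.
Proof.
  exists (proj1_sig g ∘ proj1_sig f).
  destruct g as [g Hg], f as [f Hf]; simpl.
  rewrite <- comp_assoc, Hf, comp_assoc, Hg, <- comp_assoc, <- Tmap_comp.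
  reflexivity.
Defined.

Definition FreeAlg (X : C) : Alg :=
  {| acar := T M X; astr := mu M X;
     astr_eta := mu_eta_l M X; astr_mu := mu_assoc M X |}.

Definition Fmap {X Y : C} (f : hom X Y) : AlgHom (FreeAlg X) (FreeAlg Y) :=
  exist _ (Tmap M f) (mu_nat M X Y f).

Definition str_hom (A : Alg) : AlgHom (FreeAlg (acar A)) A :=
  exist _ (astr A) (eq_sym (astr_mu A)).

Definition basis_hom (A : Alg) (b : hom (acar A) (T M (acar A)))
  (Hb : b ∘ astr A = mu M (acar A) ∘ Tmap M b) : AlgHom A (FreeAlg (acar A)) :=
  exist _ b Hb.
End Algebras.

Arguments acar {C M} a.
Arguments astr {C M} a.

Record SymMonoidal (O : Type) (Hm : O -> O -> Type)
  (cmp : forall a b c : O, Hm b c -> Hm a b -> Hm a c)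
  (id : forall a : O, Hm a a) (I : O) := {
  tens : O -> O -> O;
  tmap : forall a b a' b' : O, Hm a a' -> Hm b b' -> Hm (tens a b) (tens a' b');
  tmap_id : forall a b, tmap _ _ _ _ (id a) (id b) = id (tens a b);
  tmap_comp : forall a b a' b' a'' b'' (f : Hm a a') (g : Hm a' a'')
      (f' : Hm b b') (g' : Hm b' b''),
      tmap _ _ _ _ (cmp _ _ _ g f) (cmp _ _ _ g' f')
      = cmp _ _ _ (tmap _ _ _ _ g g') (tmap _ _ _ _ f f');
  alpha : forall a b c, Hm (tens (tens a b) c) (tens a (tens b c));
  alpha_inv : forall a b c, Hm (tens a (tens b c)) (tens (tens a b) c);
  alpha_iso1 : forall a b c, cmp _ _ _ (alpha_inv a b c) (alpha a b c) = id _;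
  alpha_iso2 : forall a b c, cmp _ _ _ (alpha a b c) (alpha_inv a b c) = id _;
  alpha_nat : forall a b c a' b' c' (f : Hm a a') (g : Hm b b') (h : Hm c c'),
      cmp _ _ _ (alpha a' b' c') (tmap _ _ _ _ (tmap _ _ _ _ f g) h)
      = cmp _ _ _ (tmap _ _ _ _ f (tmap _ _ _ _ g h)) (alpha a b c);
  lam : forall a, Hm (tens I a) a;
  lam_inv : forall a, Hm a (tens I a);
  lam_iso1 : forall a, cmp _ _ _ (lam_inv a) (lam a) = id _;
  lam_iso2 : forall a, cmp _ _ _ (lam a) (lam_inv a) = id _;
  lam_nat : forall a a' (f : Hm a a'),
      cmp _ _ _ (lam a') (tmap _ _ _ _ (id I) f) = cmp _ _ _ f (lam a);
  rho : forall a, Hm (tens a I) a;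
  rho_inv : forall a, Hm a (tens a I);
  rho_iso1 : forall a, cmp _ _ _ (rho_inv a) (rho a) = id _;
  rho_iso2 : forall a, cmp _ _ _ (rho a) (rho_inv a) = id _;
  rho_nat : forall a a' (f : Hm a a'),
      cmp _ _ _ (rho a') (tmap _ _ _ _ f (id I)) = cmp _ _ _ f (rho a);
  sigma : forall a b, Hm (tens a b) (tens b a);
  sigma_nat : forall a b a' b' (f : Hm a a') (g : Hm b b'),
      cmp _ _ _ (sigma a' b') (tmap _ _ _ _ f g)
      = cmp _ _ _ (tmap _ _ _ _ g f) (sigma a b);
  sigma_sym : forall a b, cmp _ _ _ (sigma b a) (sigma a b) = id _;
  pentagon : forall a b c d,
      cmp _ _ _ (alpha a b (tens c d)) (alpha (tens a b) c d)
      = cmp _ _ _ (tmap _ _ _ _ (id a) (alpha b c d))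
          (cmp _ _ _ (alpha a (tens b c) d) (tmap _ _ _ _ (alpha a b c) (id d)));
  triangle : forall a b,
      cmp _ _ _ (tmap _ _ _ _ (id a) (lam b)) (alpha a I b)
      = tmap _ _ _ _ (rho a) (id b);
  hexagon : forall a b c,
      cmp _ _ _ (alpha b c a) (cmp _ _ _ (sigma a (tens b c)) (alpha a b c))
      = cmp _ _ _ (tmap _ _ _ _ (id b) (sigma a c))
          (cmp _ _ _ (alpha b a c) (tmap _ _ _ _ (sigma a b) (id c))) }.

Arguments tens {O Hm cmp id I} s _ _.
Arguments tmap {O Hm cmp id I} s {a b a' b'} _ _.
Arguments alpha {O Hm cmp id I} s a b c.
Arguments lam {O Hm cmp id I} s a.
Arguments rho {O Hm cmp id I} s a.
Arguments sigma {O Hm cmp id I} s a b.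

Definition CommComonoid {O : Type} {Hm : O -> O -> Type}
  {cmp : forall a b c : O, Hm b c -> Hm a b -> Hm a c}
  {id : forall a : O, Hm a a} {I : O} (S : SymMonoidal O Hm cmp id I)
  (X : O) (d : Hm X (tens S X X)) (u : Hm X I) : Prop :=
  cmp _ _ _ (alpha S X X X) (cmp _ _ _ (tmap S d (id X)) d)
    = cmp _ _ _ (tmap S (id X) d) d
  /\ cmp _ _ _ (lam S X) (cmp _ _ _ (tmap S u (id X)) d) = id X
  /\ cmp _ _ _ (rho S X) (cmp _ _ _ (tmap S (id X) u) d) = id X
  /\ cmp _ _ _ (sigma S X X) d = d.

Definition AlgSymMonoidal {C : Category} (P : FinProducts C) (M : Monad C) : Type :=
  SymMonoidal (Alg M) (AlgHom M) (@ahcomp C M) (ahid M) (FreeAlg M (terminal P)).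

(* The free functor A -> Alg(T) is strong (symmetric) monoidal, via natural
   algebra isomorphisms xi : T X ⊗ T Y ≅ T (X × Y); the unit comparison is the
   identity I = T(1). *)
Record FreeStrongMonoidal {C : Category} (P : FinProducts C) (M : Monad C)
  (S : AlgSymMonoidal P M) := {
  xi : forall X Y : C,
      AlgHom M (tens S (FreeAlg M X) (FreeAlg M Y)) (FreeAlg M (prod P X Y));
  xi_inv : forall X Y : C,
      AlgHom M (FreeAlg M (prod P X Y)) (tens S (FreeAlg M X) (FreeAlg M Y));
  xi_iso1 : forall X Y, ahcomp M (xi_inv X Y) (xi X Y) = ahid M _;
  xi_iso2 : forall X Y, ahcomp M (xi X Y) (xi_inv X Y) = ahid M _;
  xi_nat : forall X Y X' Y' (f : hom X X') (g : hom Y Y'),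
      ahcomp M (xi X' Y') (tmap S (Fmap M f) (Fmap M g))
      = ahcomp M (Fmap M (prod_map P f g)) (xi X Y);
  xi_assoc : forall X Y Z : C,
      ahcomp M (Fmap M (assocp P X Y Z))
        (ahcomp M (xi (prod P X Y) Z) (tmap S (xi X Y) (ahid M _)))
      = ahcomp M (xi X (prod P Y Z))
          (ahcomp M (tmap S (ahid M _) (xi Y Z)) (alpha S _ _ _));
  xi_lunit : forall Y : C,
      ahcomp M (Fmap M (pr2 P (terminal P) Y)) (xi (terminal P) Y)
      = lam S (FreeAlg M Y);
  xi_runit : forall X : C,
      ahcomp M (Fmap M (pr1 P X (terminal P))) (xi X (terminal P))
      = rho S (FreeAlg M X);
  xi_sym : forall X Y : C,
      ahcomp M (Fmap M (swap P X Y)) (xi X Y)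
      = ahcomp M (xi Y X) (sigma S _ _) }.

Arguments xi {C P M S} f0 X Y.
Arguments xi_inv {C P M S} f0 X Y.

Definition d_b {C : Category} {P : FinProducts C} {M : Monad C}
  {S : AlgSymMonoidal P M} (F : FreeStrongMonoidal P M S) (A : Alg M)
  (bh : AlgHom M A (FreeAlg M (acar A))) : AlgHom M A (tens S A A) :=
  ahcomp M (tmap S (str_hom M A) (str_hom M A))
    (ahcomp M (xi_inv F (acar A) (acar A))
       (ahcomp M (Fmap M (diag P (acar A))) bh)).

Definition u_b {C : Category} {P : FinProducts C} {M : Monad C}
  (A : Alg M) (bh : AlgHom M A (FreeAlg M (acar A)))
  : AlgHom M A (FreeAlg M (terminal P)) :=
  ahcomp M (Fmap M (bang P (acar A))) bh.

(* Main.v *)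
Require Import Defs.
From Stdlib Require Import ProofIrrelevance.

Section Aux.
Context {C : Category} (P : FinProducts C) (M : Monad C).

Local Notation "g ⋅ f" := (ahcomp M g f) (at level 40, left associativity).

Lemma ah_ext {A B : Alg M} (f g : AlgHom M A B) : proj1_sig f = proj1_sig g -> f = g.
Proof.
  destruct f as [f Hf], g as [g Hg]; simpl; intros ->.
  f_equal; apply proof_irrelevance.
Qed.

Lemma ahA {A B D E : Alg M} (h : AlgHom M D E) (g : AlgHom M B D) (f : AlgHom M A B) :
  h ⋅ (g ⋅ f) = (h ⋅ g) ⋅ f.
Proof. apply ah_ext; simpl; apply comp_assoc. Qed.

Lemma ah1l {A B : Alg M} (f : AlgHom M A B) : ahid M B ⋅ f = f.
Proof. apply ah_ext; simpl; apply comp_id_l. Qed.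

Lemma ah1r {A B : Alg M} (f : AlgHom M A B) : f ⋅ ahid M A = f.
Proof. apply ah_ext; simpl; apply comp_id_r. Qed.

Lemma Fmap_comp {X Y Z : C} (g : hom Y Z) (f : hom X Y) :
  Fmap M (g ∘ f) = Fmap M g ⋅ Fmap M f.
Proof. apply ah_ext; simpl; apply Tmap_comp. Qed.

Lemma Fmap_id (X : C) : Fmap M (idm X) = ahid M (FreeAlg M X).
Proof. apply ah_ext; simpl; apply Tmap_id. Qed.

Lemma rw {A B D E : Alg M} (p : AlgHom M D E) (q : AlgHom M B D) (r : AlgHom M B E) :
  p ⋅ q = r -> forall (Z : Alg M) (z : AlgHom M Z B), p ⋅ (q ⋅ z) = r ⋅ z.
Proof. intros H Z z. rewrite ahA, H. reflexivity. Qed.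

Lemma pair_comp {Z W X Y : C} (f : hom Z X) (g : hom Z Y) (h : hom W Z) :
  pair P f g ∘ h = pair P (f ∘ h) (g ∘ h).
Proof.
  rewrite <- (pair_uniq _ P _ _ _ (pair P f g ∘ h)).
  rewrite !comp_assoc, pr1_pair, pr2_pair. reflexivity.
Qed.

Lemma pm_pair {Z X Y X' Y' : C} (f : hom X X') (g : hom Y Y') (h : hom Z X) (k : hom Z Y) :
  prod_map P f g ∘ pair P h k = pair P (f ∘ h) (g ∘ k).
Proof.
  unfold prod_map. rewrite pair_comp, <- !comp_assoc, pr1_pair, pr2_pair. reflexivity.
Qed.

Lemma pair_pr (X Y : C) : pair P (pr1 P X Y) (pr2 P X Y) = idm _.
Proof.
  rewrite <- (pair_uniq _ P _ _ _ (idm (prod P X Y))), !comp_id_r. reflexivity.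
Qed.

End Aux.

Section Main.
Context (C : Category) (P : FinProducts C) (M : Monad C)
  (S : AlgSymMonoidal P M) (F : FreeStrongMonoidal P M S).

Local Notation "g ⋅ f" := (ahcomp M g f) (at level 40, left associativity).

Lemma tcomp {a b a' b' a'' b'' : Alg M} (g : AlgHom M a' a'') (f : AlgHom M a a')
  (g' : AlgHom M b' b'') (f' : AlgHom M b b') :
  tmap S (g ⋅ f) (g' ⋅ f') = tmap S g g' ⋅ tmap S f f'.
Proof. apply (tmap_comp _ _ _ _ _ S). Qed.

Lemma tid (a b : Alg M) : tmap S (ahid M a) (ahid M b) = ahid M _.
Proof. apply (tmap_id _ _ _ _ _ S). Qed.

Definition xi1 := xi_iso1 P M S F.
Definition xi2 := xi_iso2 P M S F.
Definition xinat := xi_nat P M S F.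
Definition xiassoc := xi_assoc P M S F.
Definition xilunit := xi_lunit P M S F.
Definition xirunit := xi_runit P M S F.
Definition xisym := xi_sym P M S F.
Definition anat := alpha_nat _ _ _ _ _ S.
Definition lnat := lam_nat _ _ _ _ _ S.
Definition rnat := rho_nat _ _ _ _ _ S.
Definition snat := sigma_nat _ _ _ _ _ S.

Lemma xi_inv_nat {X Y X' Y' : C} (f : hom X X') (g : hom Y Y') :
  tmap S (Fmap M f) (Fmap M g) ⋅ xi_inv F X Y = xi_inv F X' Y' ⋅ Fmap M (prod_map P f g).
Proof.
  rewrite <- (ah1l _ (tmap S _ _ ⋅ _)).
  rewrite <- (xi1 X' Y').
  rewrite <- !ahA, (ahA _ (xi F X' Y')), xinat.
  rewrite <- ahA, xi2, ah1r. reflexivity.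
Qed.


Lemma G {X Y Z : C} (f : hom X Y) (g : hom X Z) {B : Alg M} (z : AlgHom M B (FreeAlg M X)) :
  tmap S (Fmap M f) (Fmap M g) ⋅ (xi_inv F X X ⋅ (Fmap M (diag P X) ⋅ z))
  = xi_inv F Y Z ⋅ (Fmap M (prod_map P f g ∘ diag P X) ⋅ z).
Proof.
  rewrite Fmap_comp, ahA, xi_inv_nat, <- !ahA. reflexivity.
Qed.


Lemma prod_coassoc (Y : C) :
  assocp P Y Y Y ∘ prod_map P (diag P Y) (idm Y) ∘ diag P Y
  = prod_map P (idm Y) (diag P Y) ∘ diag P Y.
Proof.
  unfold diag at 2 4. rewrite <- comp_assoc, !pm_pair, !comp_id_l, !comp_id_r.
  unfold assocp. rewrite !pair_comp, <- !comp_assoc, !pr1_pair, !pr2_pair.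
  unfold diag. rewrite !pr1_pair, !pr2_pair. reflexivity.
Qed.

Lemma xiinv_assoc (Y : C) :
  alpha S (FreeAlg M Y) (FreeAlg M Y) (FreeAlg M Y)
  = tmap S (ahid M _) (xi_inv F Y Y) ⋅ (xi_inv F Y (prod P Y Y) ⋅
     (Fmap M (assocp P Y Y Y) ⋅ (xi F (prod P Y Y) Y ⋅ tmap S (xi F Y Y) (ahid M _)))).
Proof.
  rewrite xiassoc.
  rewrite (ahA _ (xi_inv F _ _)), xi1, ah1l.
  rewrite ahA, <- tcomp, ah1l, xi1, tid, ah1l. reflexivity.
Qed.

Lemma free_coassoc (Y : C) :
  alpha S _ _ _ ⋅ (tmap S (xi_inv F Y Y ⋅ Fmap M (diag P Y)) (ahid M _) ⋅ (xi_inv F Y Y ⋅ Fmap M (diag P Y)))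
  = tmap S (ahid M _) (xi_inv F Y Y ⋅ Fmap M (diag P Y)) ⋅ (xi_inv F Y Y ⋅ Fmap M (diag P Y)).
Proof.
  rewrite xiinv_assoc. rewrite <- !ahA.
  rewrite (ahA _ (tmap S (xi F Y Y) _)), <- tcomp, ah1l, (ahA _ (xi F Y Y) (xi_inv F Y Y)), xi2, ah1l.
  rewrite <- (Fmap_id _ Y), (ahA _ (xi F _ _)), xinat, <- ahA, (ahA _ (xi F _ _)), xi2, ah1l.
  rewrite (ahA _ (Fmap M _) (Fmap M _)), <- Fmap_comp.
  rewrite <- Fmap_comp, prod_coassoc, Fmap_comp, Fmap_id.
  replace (tmap S (ahid M (FreeAlg M Y)) (xi_inv F Y Y ⋅ Fmap M (diag P Y))) with
    (tmap S (ahid M (FreeAlg M Y)) (xi_inv F Y Y) ⋅ tmap S (ahid M (FreeAlg M Y)) (Fmap M (diag P Y)))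
    by (rewrite <- tcomp, ah1l; reflexivity).
  rewrite <- !ahA. f_equal.
  rewrite <- Fmap_id, (ahA _ (tmap S _ _)), xi_inv_nat, <- ahA. reflexivity.
Qed.

Lemma free_lunit (Y : C) :
  lam S (FreeAlg M Y) ⋅ (tmap S (Fmap M (bang P Y)) (ahid M _) ⋅ (xi_inv F Y Y ⋅ Fmap M (diag P Y)))
  = ahid M _.
Proof.
  rewrite <- xilunit, <- (Fmap_id _ Y), <- !ahA, (ahA _ (xi F _ _)), xinat.
  rewrite <- ahA, (ahA _ (xi F _ _)), xi2, ah1l, <- !Fmap_comp.
  unfold diag. rewrite pm_pair, pr2_pair, !comp_id_l. first [reflexivity | apply Fmap_id].
Qed.

Lemma free_runit (Y : C) :
  rho S (FreeAlg M Y) ⋅ (tmap S (ahid M _) (Fmap M (bang P Y)) ⋅ (xi_inv F Y Y ⋅ Fmap M (diag P Y)))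
  = ahid M _.
Proof.
  rewrite <- xirunit, <- (Fmap_id _ Y), <- !ahA, (ahA _ (xi F _ _)), xinat.
  rewrite <- ahA, (ahA _ (xi F _ _)), xi2, ah1l, <- !Fmap_comp.
  unfold diag. rewrite pm_pair, pr1_pair, !comp_id_l. first [reflexivity | apply Fmap_id].
Qed.

Lemma free_sym (Y : C) :
  sigma S (FreeAlg M Y) (FreeAlg M Y) ⋅ (xi_inv F Y Y ⋅ Fmap M (diag P Y))
  = xi_inv F Y Y ⋅ Fmap M (diag P Y).
Proof.
  rewrite <- (ah1l _ (sigma S _ _)), <- (xi1 Y Y), <- !ahA.
  rewrite (ahA _ (xi F Y Y)), <- xisym, <- !ahA, (ahA _ (xi F Y Y)), xi2, ah1l.
  rewrite <- Fmap_comp. unfold swap, diag. rewrite pair_comp, pr1_pair, pr2_pair. reflexivity.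
Qed.
Section Basis.
Context (A : Alg M) (b : hom (acar A) (T M (acar A)))
  (Hb_hom : b ∘ astr A = mu M (acar A) ∘ Tmap M b)
  (Hb_sec : astr A ∘ b = idm (acar A))
  (Hb_coalg : Tmap M (eta M (acar A)) ∘ b = Tmap M b ∘ b).

Local Notation X := (acar A).
Let a := str_hom M A.
Let bh := basis_hom M A b Hb_hom.
Let mh := str_hom M (FreeAlg M X).

Lemma E1 : bh ⋅ a = mh ⋅ Fmap M b.
Proof. apply ah_ext; simpl. exact Hb_hom. Qed.

Lemma E3 : mh ⋅ Fmap M (eta M X) = ahid M _.
Proof. apply ah_ext; simpl. apply mu_eta_r. Qed.

Lemma E4a : Fmap M (prod_map P b (eta M X) ∘ diag P X) ⋅ bh
          = Fmap M (prod_map P (eta M X) (eta M X) ∘ diag P X) ⋅ bh.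
Proof.
  apply ah_ext; simpl. unfold diag. rewrite !pm_pair.
  assert (H1 : pair P (b ∘ idm X) (eta M X ∘ idm X) = pair P (idm _) (eta M X ∘ astr A) ∘ b).
  { rewrite pair_comp, <- comp_assoc, Hb_sec, !comp_id_r, comp_id_l. reflexivity. }
  assert (H2 : pair P (eta M X ∘ idm X) (eta M X ∘ idm X) = pair P (idm _) (eta M X ∘ astr A) ∘ eta M X).
  { rewrite pair_comp, <- comp_assoc, astr_eta, !comp_id_r, comp_id_l. reflexivity. }
  rewrite H1, H2, !Tmap_comp, <- !comp_assoc. f_equal. symmetry. exact Hb_coalg.
Qed.

Lemma E4b : Fmap M (prod_map P (eta M X) b ∘ diag P X) ⋅ bh
          = Fmap M (prod_map P (eta M X) (eta M X) ∘ diag P X) ⋅ bh.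
Proof.
  apply ah_ext; simpl. unfold diag. rewrite !pm_pair.
  assert (H1 : pair P (eta M X ∘ idm X) (b ∘ idm X) = pair P (eta M X ∘ astr A) (idm _) ∘ b).
  { rewrite pair_comp, <- comp_assoc, Hb_sec, !comp_id_r, comp_id_l. reflexivity. }
  assert (H2 : pair P (eta M X ∘ idm X) (eta M X ∘ idm X) = pair P (eta M X ∘ astr A) (idm _) ∘ eta M X).
  { rewrite pair_comp, <- comp_assoc, astr_eta, !comp_id_r, comp_id_l. reflexivity. }
  rewrite H1, H2, !Tmap_comp, <- !comp_assoc. f_equal. symmetry. exact Hb_coalg.
Qed.

Lemma Ktm {B B' : Alg M} (h : AlgHom M (FreeAlg M X) B) (k : AlgHom M (FreeAlg M X) B') :
  tmap S h k = tmap S (h ⋅ mh) (k ⋅ mh) ⋅ tmap S (Fmap M (eta M X)) (Fmap M (eta M X)).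
Proof. rewrite <- tcomp, <- !ahA, E3, !ah1r. reflexivity. Qed.

Lemma KL {B B' : Alg M} (h : AlgHom M (FreeAlg M X) B) (k : AlgHom M (FreeAlg M X) B') :
  tmap S (h ⋅ (bh ⋅ a)) k ⋅ (xi_inv F X X ⋅ (Fmap M (diag P X) ⋅ bh))
  = tmap S h k ⋅ (xi_inv F X X ⋅ (Fmap M (diag P X) ⋅ bh)).
Proof.
  rewrite E1, (Ktm h k).
  replace (tmap S (h ⋅ (mh ⋅ Fmap M b)) k) with
    (tmap S (h ⋅ mh) (k ⋅ mh) ⋅ tmap S (Fmap M b) (Fmap M (eta M X)))
    by (rewrite <- tcomp, <- !ahA, E3, !ah1r; reflexivity).
  rewrite <- !ahA, !G. f_equal. f_equal. apply E4a.
Qed.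

Lemma KR {B B' : Alg M} (h : AlgHom M (FreeAlg M X) B) (k : AlgHom M (FreeAlg M X) B') :
  tmap S h (k ⋅ (bh ⋅ a)) ⋅ (xi_inv F X X ⋅ (Fmap M (diag P X) ⋅ bh))
  = tmap S h k ⋅ (xi_inv F X X ⋅ (Fmap M (diag P X) ⋅ bh)).
Proof.
  rewrite E1, (Ktm h k).
  replace (tmap S h (k ⋅ (mh ⋅ Fmap M b))) with
    (tmap S (h ⋅ mh) (k ⋅ mh) ⋅ tmap S (Fmap M (eta M X)) (Fmap M b))
    by (rewrite <- tcomp, <- !ahA, E3, !ah1r; reflexivity).
  rewrite <- !ahA, !G. f_equal. f_equal. apply E4b.
Qed.


Let Dx := xi_inv F X X ⋅ Fmap M (diag P X).
Let W := xi_inv F X X ⋅ (Fmap M (diag P X) ⋅ bh).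

Lemma coassoc_b :
  alpha S A A A ⋅ (tmap S (tmap S a a ⋅ W) (ahid M A) ⋅ (tmap S a a ⋅ W))
  = tmap S (ahid M A) (tmap S a a ⋅ W) ⋅ (tmap S a a ⋅ W).
Proof.
  rewrite !(ahA _ (tmap S _ _) (tmap S a a)), <- !tcomp, ah1l.
  replace ((tmap S a a ⋅ W) ⋅ a) with ((tmap S a a ⋅ Dx) ⋅ (bh ⋅ a))
    by (unfold W, Dx; rewrite <- !ahA; reflexivity).
  unfold W. rewrite KL.
  replace ((tmap S a a ⋅ W) ⋅ a) with ((tmap S a a ⋅ Dx) ⋅ (bh ⋅ a))
    by (unfold W, Dx; rewrite <- !ahA; reflexivity).
  rewrite KR.
  replace (tmap S (tmap S a a ⋅ Dx) a) with (tmap S (tmap S a a) a ⋅ tmap S Dx (ahid M _))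
    by (rewrite <- tcomp, ah1r; reflexivity).
  replace (tmap S a (tmap S a a ⋅ Dx)) with (tmap S a (tmap S a a) ⋅ tmap S (ahid M _) Dx)
    by (rewrite <- tcomp, ah1r; reflexivity).
  rewrite <- !ahA, (ahA _ (alpha S _ _ _)), anat, <- !ahA. f_equal.
  replace (xi_inv F X X ⋅ (Fmap M (diag P X) ⋅ bh)) with (Dx ⋅ bh)
    by (unfold Dx; rewrite <- !ahA; reflexivity).
  rewrite !ahA. f_equal. rewrite <- ahA. unfold Dx. apply free_coassoc.
Qed.

Lemma lunit_b :
  lam S A ⋅ (tmap S (Fmap M (bang P X) ⋅ bh) (ahid M A) ⋅ (tmap S a a ⋅ W)) = ahid M A.
Proof.
  rewrite (ahA _ (tmap S _ _) (tmap S a a)), <- tcomp, ah1l.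
  replace ((Fmap M (bang P X) ⋅ bh) ⋅ a) with (Fmap M (bang P X) ⋅ (bh ⋅ a))
    by (rewrite <- !ahA; reflexivity).
  unfold W. rewrite KL.
  replace (tmap S (Fmap M (bang P X)) a) with (tmap S (ahid M _) a ⋅ tmap S (Fmap M (bang P X)) (ahid M _))
    by (rewrite <- tcomp, ah1l, ah1r; reflexivity).
  rewrite <- ahA, (ahA _ (lam S _)), lnat, <- !ahA.
  rewrite (ahA _ (xi_inv F X X)), (ahA _ (tmap S _ _)), (ahA _ (lam S _)).
  rewrite free_lunit, ah1l. apply ah_ext; simpl. exact Hb_sec.
Qed.

Lemma runit_b :
  rho S A ⋅ (tmap S (ahid M A) (Fmap M (bang P X) ⋅ bh) ⋅ (tmap S a a ⋅ W)) = ahid M A.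
Proof.
  rewrite (ahA _ (tmap S _ _) (tmap S a a)), <- tcomp, ah1l.
  replace ((Fmap M (bang P X) ⋅ bh) ⋅ a) with (Fmap M (bang P X) ⋅ (bh ⋅ a))
    by (rewrite <- !ahA; reflexivity).
  unfold W. rewrite KR.
  replace (tmap S a (Fmap M (bang P X))) with (tmap S a (ahid M _) ⋅ tmap S (ahid M _) (Fmap M (bang P X)))
    by (rewrite <- tcomp, ah1l, ah1r; reflexivity).
  rewrite <- ahA, (ahA _ (rho S _)), rnat, <- !ahA.
  rewrite (ahA _ (xi_inv F X X)), (ahA _ (tmap S _ _)), (ahA _ (rho S _)).
  rewrite free_runit, ah1l. apply ah_ext; simpl. exact Hb_sec.
Qed.

Lemma sym_b : sigma S A A ⋅ (tmap S a a ⋅ W) = tmap S a a ⋅ W.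
Proof.
  rewrite ahA, snat, <- ahA. f_equal. unfold W.
  rewrite (ahA _ (xi_inv F X X)), (ahA _ (sigma S _ _)), free_sym, <- ahA. reflexivity.
Qed.
End Basis.
End Main.

Theorem proposition6p1
  (C : Category) (P : FinProducts C) (M : Monad C)
  (Str : CommStrength P M)
  (S : AlgSymMonoidal P M) (F : FreeStrongMonoidal P M S)
  (A : Alg M) (b : hom (acar A) (T M (acar A)))
  (Hb_hom : b ∘ astr A = mu M (acar A) ∘ Tmap M b)
  (Hb_sec : astr A ∘ b = idm (acar A))
  (Hb_coalg : Tmap M (eta M (acar A)) ∘ b = Tmap M b ∘ b) :
  CommComonoid S A (d_b F A (basis_hom M A b Hb_hom))
                   (u_b (P := P) A (basis_hom M A b Hb_hom)).
Proof.
  unfold CommComonoid, d_b, u_b. split; [|split; [|split]].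
  - exact (coassoc_b C P M S F A b Hb_hom Hb_sec Hb_coalg).
  - exact (lunit_b C P M S F A b Hb_hom Hb_sec Hb_coalg).
  - exact (runit_b C P M S F A b Hb_hom Hb_sec Hb_coalg).
  - exact (sym_b C P M S F A b Hb_hom).
Qed.
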